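(* Let $k$ be a field, $R=k[x_1,\ldots,x_n]$, and let $I$ be an almost reverse lexicographic ideal in $R$ whose last generator is $M_\omega=x^\omega$ with $\omega=(\omega_1,\ldots,\omega_\mu)$, $\omega_\mu>0$, $\mu\ge2$. Let $1\le i\le\mu-1$. For every $\alpha=(\alpha_1,\ldots,\alpha_i)\in\mathcal{I}_i$: (1) $0<f_{i+1}(\alpha)<\infty$; (2) $x^\alpha x_{i+1}^{f_{i+1}(\alpha)}\in\mathcal{G}(I)$; (3) if $\alpha_j\ge1$ for some $1\le j\le i$, then $f_{i+1}(\alpha_1,\ldots,\alpha_j,\ldots,\alpha_i)+1\le f_{i+1}(\alpha_1,\ldots,\alpha_j-1,\ldots,\alpha_i)$.
   Context: Monomial order: degree reverse lexicographic: for $M=x^\alpha,N=x^\beta$, $M>N$ iff $\deg M>\deg N$, or degrees are equal and for the largest $s$ with $\alpha_s\neq\beta_s$ one has $\alpha_s<\beta_s$. For $\alpha\in\mathbb{Z}^s_{\ge0}$, $x^\alpha=x_1^{\alpha_1}\cdots x_s^{\alpha_s}$, $|\alpha|=\sum\alpha_j$, and $\alpha\le\beta$ iff $x^\alpha\le x^\beta$. A monomial ideal $I$ is almost reverse lexicographic if for every monomial $M$ and every minimal monomial generator $N$ of $I$ with $\deg M=\deg N$ and $M>N$, one has $M\in I$. $\mathcal{G}(I)$ is the minimal monomial generating set; $\max M$ is the largest $i$ with $x_i\mid M$. The last generator $M_\omega$ is the element of $\mathcal{G}(I)$ of maximal degree that is smallest in the order among elements of $\mathcal{G}(I)$ of that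 degree; $\mu=\max M_\omega$. $f_1=\min\{t:x_1^t\in I\}$; for $2\le i\le\mu$, $\alpha\in\mathbb{Z}^{i-1}_{\ge0}$, $f_i(\alpha)=\min\{t\ge0:x^\alpha x_i^t\in I\}\in\mathbb{Z}_{\ge0}\cup\{\infty\}$. For $1\le i\le\mu-2$, $\mathcal{I}_i=\{(\alpha_1,\ldots,\alpha_i)\in\mathbb{Z}^i_{\ge0}: 0\le\alpha_1<f_1,\ 0\le\alpha_j<f_j(\alpha_1,\ldots,\alpha_{j-1})\ (2\le j\le i)\}$, and $\mathcal{I}_{\mu-1}$ is the set of $(\alpha_1,\ldots,\alpha_{\mu-1})$ satisfying these inequalities for $j\le\mu-1$ together with $(\alpha_1,\ldots,\alpha_{\mu-1})\ge(\omega_1,\ldots,\omega_{\mu-1})$. *)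

(* Defs.v *)
(* Monomial ideals of k[x_1,...,x_n] are represented by their
   sets of exponent vectors. Variable x_{j+1} <-> ordinal j. *)
From mathcomp Require Import all_boot.
From Stdlib Require Import ClassicalEpsilon.
Set Implicit Arguments. Unset Strict Implicit. Unset Printing Implicit Defensive.

Definition mon (n : nat) := {ffun 'I_n -> nat}.

Section Mon.
Variable n : nat.

Definition deg (a : mon n) : nat := \sum_(j < n) a j.

Definition mdiv (a b : mon n) : bool := [forall j, a j <= b j].

(* exponent of x_{j+1} (0 outside the range) *)
Definition cf (a : mon n) (j : nat) : nat :=
  match @insub nat (fun k => k < n) 'I_n j with Some k => a k | None => 0 end.

Definition pad (s : seq nat) : mon n := [ffun j : 'I_n => nth 0 s j].

Definition trunc (k : nat) (a : mon n) : mon n :=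
  [ffun j : 'I_n => if j < k then a j else 0].

(* degree reverse lexicographic order: revlex_gt a b  <=>  x^a > x^b *)
Definition revlex_gt (a b : mon n) : bool :=
  (deg b < deg a) ||
  ((deg a == deg b) &&
   [exists s : 'I_n, (a s < b s) && [forall t : 'I_n, (s < t) ==> (a t == b t)]]).

Definition revlex_ge (a b : mon n) : bool := (a == b) || revlex_gt a b.

Definition monomial_ideal (I : pred (mon n)) : Prop :=
  forall a b, a \in I -> mdiv a b -> b \in I.

Definition mingen (I : pred (mon n)) (a : mon n) : Prop :=
  a \in I /\ forall b, b \in I -> mdiv b a -> b = a.

Definition almost_revlex (I : pred (mon n)) : Prop :=
  forall M N, mingen I N -> deg M = deg N -> revlex_gt M N -> M \in I.

Definition last_generator (I : pred (mon n)) (w : mon n) : Prop :=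
  mingen I w /\
  forall g, mingen I g -> deg g <= deg w /\ (deg g = deg w -> revlex_ge g w).

(* extended naturals Z_{>=0} u {oo}: None = oo *)
Definition minx (P : pred nat) : option nat :=
  match excluded_middle_informative (exists t, P t) with
  | left h => Some (ex_minn h)
  | right _ => None
  end.

Definition lt_ext (a : nat) (o : option nat) : bool :=
  if o is Some t then a < t else true.

Definition le_ext (o1 o2 : option nat) : bool :=
  match o1, o2 with
  | _, None => true
  | None, Some _ => false
  | Some a, Some b => a <= b
  end.

(* f I alpha, for alpha = (alpha_1,...,alpha_{j-1}), is f_j(alpha)
   = min { t : x^alpha x_j^t \in I }; f I [::] is f_1 *)
Definition fI (I : pred (mon n)) (alpha : seq nat) : option nat :=
  minx (fun t => pad (rcons alpha t) \in I).

Definition in_Ical (I : pred (mon n)) (w : mon n) (mu i : nat) (alpha : seq nat)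
  : Prop :=
  size alpha = i /\
  (forall j, j < i -> lt_ext (nth 0 alpha j) (fI I (take j alpha))) /\
  (i = mu.-1 -> revlex_ge (pad alpha) (trunc mu.-1 w)).

End Mon.

(* Main.v *)
Require Import Defs.
From mathcomp Require Import all_boot.
From mathcomp Require Import zify.
From Stdlib Require Import Classical ClassicalEpsilon.
Set Implicit Arguments. Unset Strict Implicit. Unset Printing Implicit Defensive.
Section Helpers.
Variable n : nat.
Implicit Types a b : mon n.

Lemma mdivP a b : reflect (forall j, a j <= b j) (mdiv a b).
Proof. exact: forallP. Qed.

Lemma mdiv_trans a b c : mdiv a b -> mdiv b c -> mdiv a c.
Proof. move=> /mdivP h1 /mdivP h2; apply/mdivP => j; exact: leq_trans (h1 j) (h2 j). Qed.

Lemma deg_ge a k : a k <= deg a.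
Proof. rewrite /deg (bigD1 k) //=; exact: leq_addr. Qed.

Lemma mdiv_deg a b : mdiv a b -> deg a <= deg b.
Proof. move=> /mdivP h; apply: leq_sum => j _; exact: h. Qed.

Lemma mdiv_eq a b : mdiv a b -> deg a = deg b -> a = b.
Proof.
move=> hab hd; have /mdivP h := hab.
apply/ffunP => k; apply/eqP; rewrite eqn_leq h /=.
rewrite leqNgt; apply/negP => lt.
have : deg a < deg b.
  rewrite /deg (bigD1 k) //= [X in _ < X](bigD1 k) //=.
  rewrite -addSn; apply: leq_add lt _; apply: leq_sum => j _; exact: h.
by rewrite hd ltnn.
Qed.

Definition upd a (k : 'I_n) v : mon n := [ffun j => if j == k then v else a j].

Lemma deg_upd a k v : deg (upd a k v) + a k = deg a + v.
Proof.
have h1 : deg (upd a k v) = v + \sum_(j < n | j != k) a j.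
  rewrite /deg (bigD1 k) //= ffunE eqxx; congr (_ + _).
  by apply: eq_bigr => j /negbTE hj; rewrite ffunE hj.
have h2 : deg a = a k + \sum_(j < n | j != k) a j by rewrite /deg (bigD1 k).
rewrite h1 h2; lia.
Qed.

Lemma exists_gen (I : pred (mon n)) a : a \in I -> exists g, mingen I g /\ mdiv g a.
Proof.
move: {2}(deg a) (leqnn (deg a)) => m; elim: m a => [|m IH] a ha aI.
  exists a; split; last by apply/mdivP.
  split; first done.
  move=> b bI hb; have := mdiv_deg hb; move=> hd; apply: mdiv_eq hb _; lia.
case: (classic (mingen I a)) => [hg|hng].
  exists a; split => //; by apply/mdivP.
have [b [bI [hb hba]]] : exists b, b \in I /\ mdiv b a /\ b <> a.
  apply: NNPP => hn; apply: hng; split => // b bI hb.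
  apply: NNPP => hne; apply: hn; by exists b.
have hlt : deg b < deg a.
  rewrite ltn_neqAle mdiv_deg // andbT; apply/eqP => e; exact: hba (mdiv_eq hb e).
have hbm : deg b <= m by rewrite -ltnS (leq_trans hlt ha).
have [g [hg hgb]] := IH b hbm bI.
exists g; split => //; exact: mdiv_trans hgb hb.
Qed.

Lemma dec_exists a : 0 < deg a -> exists b, mdiv b a /\ deg b = (deg a).-1.
Proof.
move=> hpos.
have [k hk] : exists k, 0 < a k.
  apply: NNPP => hn.
  have : deg a = 0.
    rewrite /deg big1 // => j _.
    apply/eqP; rewrite -leqn0 leqNgt; apply/negP => h; apply: hn; by exists j.
  lia.
exists (upd a k (a k).-1); split.
  apply/mdivP => j; rewrite ffunE; case: eqP => [->|] //=; exact: leq_pred.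
have := deg_upd a k (a k).-1; lia.
Qed.

Lemma divisor_deg a d : d <= deg a -> exists b, mdiv b a /\ deg b = d.
Proof.
move=> h; move: {2}(deg a - d) (erefl (deg a - d)) => k.
elim: k a h => [|k IH] a h hk.
  exists a; split; [by apply/mdivP | lia].
have hp : 0 < deg a by lia.
have [b [hb hdb]] := dec_exists hp.
have h1 : d <= deg b by lia.
have h2 : deg b - d = k by lia.
have [c [hc hdc]] := IH b h1 h2.
exists c; split => //; exact: mdiv_trans hc hb.
Qed.

Lemma minx_some (P : pred nat) t : minx P = Some t -> P t /\ forall u, P u -> t <= u.
Proof.
rewrite /minx; case: excluded_middle_informative => // h [<-].
by case: ex_minnP => m hm hmin; split.
Qed.

Lemma minx_none (P : pred nat) : minx P = None -> forall u, ~~ P u.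
Proof.
rewrite /minx; case: excluded_middle_informative => // h _ u.
apply/negP => hu; apply: h; by exists u.
Qed.

Lemma minx_ex (P : pred nat) u : P u -> exists t, minx P = Some t.
Proof.
rewrite /minx; case: excluded_middle_informative => [h _|h hu]; first by eexists.
by case: h; exists u.
Qed.

Lemma cfE a (k : 'I_n) : cf a k = a k.
Proof. by rewrite /cf valK. Qed.

Lemma cf_lt a j : 0 < cf a j -> j < n.
Proof. rewrite /cf; by case: insubP. Qed.

Lemma lt_ext_notin (I : pred (mon n)) s x :
  lt_ext x (fI I s) -> ~~ (pad n (rcons s x) \in I).
Proof.
rewrite /fI; case E: minx => [t|] /=.
  move=> h; have [_ hm] := minx_some E; apply/negP => hin; have := hm _ hin; lia.
move=> _; exact: (minx_none E x).
Qed.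

Lemma pad_rcons0 s : pad n (rcons s 0) = pad n s.
Proof.
apply/ffunP => k; rewrite !ffunE nth_rcons; case: ltnP => // h.
by rewrite nth_default //; case: eqP.
Qed.

End Helpers.

Lemma ord_neq n (u s : 'I_n) m : val s = m -> (u:nat) != m -> (u == s) = false.
Proof. move=> <- h; apply/negbTE; apply: contra h => /eqP ->; done. Qed.

Ltac crush := repeat (match goal with |- context [if ?b then _ else _] => case: (boolP b) end); simpl; intros; lia.

Theorem lemma2p9 (n : nat) (I : pred (mon n)) (w : mon n) (mu : nat) :
  monomial_ideal I -> almost_revlex I -> last_generator I w ->
  (* w = (w_1,...,w_mu) with w_mu > 0, i.e. mu = max M_omega *)
  0 < cf w mu.-1 -> (forall j, mu <= j -> cf w j = 0) ->
  2 <= mu ->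
  forall i, 1 <= i <= mu.-1 ->
  forall alpha : seq nat, in_Ical I w mu i alpha ->
  [/\ (exists t, fI I alpha = Some t /\ 0 < t),
      (forall t, fI I alpha = Some t -> mingen I (pad n (rcons alpha t)))
    & (forall j, j < i -> 1 <= nth 0 alpha j ->
         le_ext (omap succn (fI I alpha))
                (fI I (set_nth 0 alpha j (nth 0 alpha j).-1)))].
Proof.
move=> hI har hlg hwpos hwz hmu i /andP[hi1 hi2] alpha [hsz [hlt hge]].
have hmun : mu.-1 < n := cf_lt hwpos.
have hin : i < n by lia.
have [i0 hi0] : exists i0 : 'I_n, val i0 = i by exists (Ordinal hin).
have [s0 hs0] : exists s0 : 'I_n, val s0 = mu.-1 by exists (Ordinal hmun).
have hws0 : 0 < w s0 by rewrite -cfE hs0.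
have hwz' : forall k : 'I_n, mu <= k -> w k = 0 by move=> k hk; rewrite -cfE hwz.
have hgw : mingen I w := hlg.1.
have hG : forall a : mon n, (forall k : 'I_n, mu.-1 <= k -> a k = 0) ->
    deg w <= deg a -> a \in I.
  move=> a ha hda.
  have [b [hb hdb]] := divisor_deg hda.
  have /mdivP hb' := hb.
  have hbI : b \in I.
    apply: (har b w hgw hdb).
    rewrite /revlex_gt hdb eqxx ltnn /=; apply/existsP; exists s0.
    have hbs0 : b s0 = 0 by have := hb' s0; rewrite ha ?hs0 //; lia.
    rewrite hbs0 hws0 /=; apply/forallP => u; apply/implyP => hu.
    have := hb' u; rewrite ha; last by rewrite hs0 in hu; lia.
    rewrite hwz'; last by rewrite hs0 in hu; lia.
    move=> h; apply/eqP; lia.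
  exact: hI hbI hb.
have hA : ~~ (pad n alpha \in I).
  have hii : i.-1 < i by lia.
  have := hlt _ hii; move/lt_ext_notin.
  rewrite -take_nth; last by rewrite hsz; lia.
  have -> : i.-1.+1 = i by lia.
  by rewrite -hsz take_size.
have hB : exists t, pad n (rcons alpha t) \in I.
  case: (ltnP i mu.-1) => hi.
    exists (deg w); apply: hG.
      move=> k hk; rewrite ffunE nth_rcons hsz; crush.
    apply: leq_trans (deg_ge _ i0); rewrite ffunE nth_rcons hsz hi0 ltnn eqxx //.
  have him : i = mu.-1 by lia.
  case: (leqP (deg w) (deg (pad n alpha))) => hdeg.
    exfalso; move/negP: hA; apply; apply: hG => // k hk.
    rewrite ffunE nth_default // hsz; lia.
  exists (deg w - deg (pad n alpha)).
  set t := deg w - deg (pad n alpha).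
  have hM : pad n (rcons alpha t) = upd (pad n alpha) s0 t.
    apply/ffunP => k; rewrite /upd !ffunE nth_rcons hsz -val_eqE hs0.
    case: (boolP (k < i)) => h1.
      have -> : (nat_of_ord k == mu.-1) = false by apply/negbTE; lia.
      by [].
    rewrite nth_default ?hsz; last lia.
    by rewrite him.
  have hpa0 : pad n alpha s0 = 0 by rewrite ffunE nth_default // hsz hs0 him.
  have hdM : deg (pad n (rcons alpha t)) = deg w.
    have := deg_upd (pad n alpha) s0 t; rewrite hM hpa0; lia.
  have hge' := hge him.
  set beta := trunc mu.-1 w in hge' *.
  have hb0 : beta s0 = 0 by rewrite ffunE hs0 ltnn.
  have hw : w = upd beta s0 (w s0).
    apply/ffunP => k; rewrite /upd !ffunE -val_eqE hs0.
    case: (boolP (nat_of_ord k == mu.-1)) => h1.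
      by congr (w _); apply: val_inj; rewrite hs0; apply/eqP.
    case: ltnP => // h2; rewrite hwz' //; lia.
  have hdw : deg w = deg beta + w s0.
    have := deg_upd beta s0 (w s0); rewrite -hw hb0; lia.
  case/orP: hge' => [/eqP heq | hgt].
    have ht : t = w s0 by rewrite /t heq; lia.
    have -> : pad n (rcons alpha t) = w by rewrite hM heq ht -hw.
    exact: hgw.1.
  apply: (har _ w hgw hdM).
  apply/orP; right; rewrite hdM eqxx /=; apply/existsP.
  move: hgt; rewrite /revlex_gt => /orP [hd1 | /andP [/eqP hd2 /existsP [s /andP [hs1 /forallP hs2]]]].
    exists s0; rewrite hM /upd !ffunE eqxx.
    apply/andP; split; first by rewrite /t; lia.
    apply/forallP => u; apply/implyP => hu.
    have hu' : (u == s0) = false by apply: (ord_neq hs0); rewrite hs0 in hu; lia.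
    rewrite ffunE hu' ffunE nth_default; last by rewrite hsz; rewrite hs0 in hu; lia.
    rewrite hwz' //; rewrite hs0 in hu; lia.
  have hsl : s < mu.-1.
    rewrite ltnNge; apply/negP => h; move: hs1; rewrite /beta !ffunE nth_default ?hsz ?him //; case: (ltnP s mu.-1) => h'; lia.
  exists s; rewrite hM /upd !ffunE.
  have hs' : (s == s0) = false by apply: (ord_neq hs0); lia.
  rewrite hs'; apply/andP; split.
    move: hs1; rewrite hw /upd !ffunE hs' //.
  apply/forallP => u; apply/implyP => hu.
  have := hs2 u; rewrite hu /= => /eqP hpu.
  rewrite hw /upd !ffunE.
  case: (eqVneq u s0) => [_|hne]; first by apply/eqP; rewrite /t; lia.
  move: hpu; rewrite /beta !ffunE => ->; done.
have [t E] : exists t, fI I alpha = Some t.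
  case: hB => u hu; exact: (minx_ex (P := fun t => pad n (rcons alpha t) \in I) hu).
have [hPt hmin] := minx_some E.
have htpos : 0 < t.
  rewrite lt0n; apply/eqP => e; move: hPt; rewrite e /= pad_rcons0 => h.
  by rewrite h in hA.
have hQ : ~~ (pad n (rcons alpha t.-1) \in I).
  apply/negP => h; have := hmin _ h; lia.
have hK : forall j, j < i -> 0 < nth 0 alpha j ->
    ~~ (pad n (rcons (set_nth 0 alpha j (nth 0 alpha j).-1) t) \in I).
  move=> j hj haj; apply/negP => hN.
  have [G [hG1 hG2]] := exists_gen hN.
  have /mdivP hGd := hG2.
  have hjn : j < n by lia.
  have [j0 hj0] : exists j0 : 'I_n, val j0 = j by exists (Ordinal hjn).
  case: (ltnP (G i0) t) => hGi.
    move/negP: hQ; apply; apply: hI hG1.1 _; apply/mdivP => k.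
    have := hGd k; rewrite !ffunE !nth_rcons size_set_nth nth_set_nth /= hsz.
    case: (eqVneq k i0) => [-> | hk].
      rewrite hi0 ltnn eqxx; lia.
    have hk' : (k : nat) != i by apply: contra hk => /eqP e; apply/eqP/val_inj; rewrite /= e hi0.
    have -> : maxn j.+1 i = i by lia.
    case: (eqVneq (nat_of_ord k) j) => [-> | nkj]; crush.
  have hGt : G i0 = t.
    have := hGd i0; rewrite !ffunE !nth_rcons size_set_nth hsz hi0.
    have -> : maxn j.+1 i = i by lia.
    rewrite ltnn eqxx; lia.
  have hij : (j0 == i0) = false by apply: (ord_neq hi0); rewrite hj0; lia.
  pose G' := upd (upd G j0 (G j0).+1) i0 (G i0).-1.
  have hdG' : deg G' = deg G.
    have h1 := deg_upd G j0 (G j0).+1.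
    have h2 : deg G' + upd G j0 (G j0).+1 i0 = deg (upd G j0 (G j0).+1) + (G i0).-1 := deg_upd _ _ _.
    have h3 : upd G j0 (G j0).+1 i0 = G i0.
      rewrite /upd ffunE.
      have -> : (i0 == j0) = false by apply: (ord_neq hj0); rewrite hi0; lia.
      done.
    lia.
  have hG'I : G' \in I.
    apply: (har G' G hG1 hdG').
    rewrite /revlex_gt hdG' eqxx ltnn /=; apply/existsP; exists i0.
    rewrite /G' /upd !ffunE eqxx /=; apply/andP; split; first lia.
    apply/forallP => u; apply/implyP => hu.
    rewrite !ffunE.
    have -> : (u == i0) = false by apply: (ord_neq hi0); rewrite hi0 in hu; lia.
    have -> : (u == j0) = false by apply: (ord_neq hj0); rewrite hi0 in hu; lia.
    done.
  move/negP: hQ; apply; apply: hI hG'I _; apply/mdivP => k.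
  have := hGd k; rewrite /G' /upd !ffunE !nth_rcons size_set_nth nth_set_nth /= hsz (_ : maxn j.+1 i = i); last by lia.
  case: (eqVneq k i0) => [-> | hk].
    rewrite hi0 ltnn eqxx; lia.
  have hk' : (k : nat) != i by apply: contra hk => /eqP e; apply/eqP/val_inj; rewrite /= e hi0.
  case: (eqVneq k j0) => [-> | hk2].
    rewrite hj0 hj eqxx; lia.
  have hk2' : (k : nat) != j by apply: contra hk2 => /eqP e; apply/eqP/val_inj; rewrite /= e hj0.
  crush.
split.
- by exists t.
- move=> t'; rewrite E => -[<-]; split; first exact: hPt.
  move=> b hbI /mdivP hb; apply/ffunP => k; apply/eqP; rewrite eqn_leq hb /= leqNgt.
  apply/negP => hk.
  case: (eqVneq k i0) => [ek | nk].
    move/negP: hQ; apply; apply: hI hbI _; apply/mdivP => u.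
    have := hb u; move: hk; rewrite ek !ffunE !nth_rcons hsz hi0 ltnn eqxx.
    case: (eqVneq u i0) => [-> | hu].
      rewrite hi0 ltnn eqxx; lia.
    have hu' : (u : nat) != i by apply: contra hu => /eqP e; apply/eqP/val_inj; rewrite /= e hi0.
    crush.
  have nk' : (k : nat) != i by apply: contra nk => /eqP e; apply/eqP/val_inj; rewrite /= e hi0.
  have hki : k < i.
    move: hk; rewrite !ffunE nth_rcons hsz; crush.
  have hak : 0 < nth 0 alpha k.
    move: hk; rewrite !ffunE nth_rcons hsz hki; lia.
  move/negP: (hK k hki hak); apply; apply: hI hbI _; apply/mdivP => u.
  have := hb u; move: hk; rewrite !ffunE !nth_rcons size_set_nth nth_set_nth /= hsz hki.
  have -> : maxn k.+1 i = i by lia.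
  case: (eqVneq u k) => [-> | hu].
    rewrite hki eqxx; lia.
  have hu' : (u : nat) != k by apply: contra hu => /eqP e; apply/eqP/val_inj; rewrite /= e.
  crush.
- move=> j hj haj; rewrite E /=.
  case E': (fI I _) => [t'|] //=.
  have [hP' _] := minx_some E'.
  have hPt' : pad n (rcons alpha t') \in I.
    apply: hI hP' _; apply/mdivP => u; rewrite !ffunE !nth_rcons size_set_nth nth_set_nth /= hsz.
    have -> : maxn j.+1 i = i by lia.
    case: (eqVneq (nat_of_ord u) j) => [-> | nuj]; crush.
  have := hmin _ hPt'.
  rewrite leq_eqVlt => /orP [/eqP e | //].
  by move: (hK j hj haj); rewrite e /= hP'.
Qed.
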